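(* Let $X$ be a finite set. For each $x\in X$ there is a homomorphism $\rho_x:\mathbb{A}_X\to\mathbb{A}_X$ satisfying \[ \rho_x(a_{u,v})=\sum_{y\in X}a_{yu,xv} \] for all $u,v\in X^n$, $n\ge 0$.
   Context: For $n\geq 0$, $X^n$ is the set of words of length $n$ in $X$, with $X^0=\{\varnothing\}$; juxtaposition denotes concatenation of words. $\mathbb{A}_X$ is the universal $C^*$-algebra generated by elements $\{a_{u,v}: u,v\in X^n,\ n\geq 0\}$ subject to: (i) $a_{\varnothing,\varnothing}=1$; (ii) $a_{u,v}^*=a_{u,v}^2=a_{u,v}$; (iii) for all $n\geq0$, $u,v\in X^n$, $x\in X$: $a_{u,v}=\sum_{y\in X}a_{ux,vy}=\sum_{z\in X}a_{uz,vx}$. ''Homomorphism'' means $*$-homomorphism of $C^*$-algebras. *)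

(* Defs.v *)
From mathcomp Require Import all_boot all_algebra.
From mathcomp Require Import reals Rstruct.
From mathcomp Require Import complex.
Set Implicit Arguments.
Unset Strict Implicit.
Unset Printing Implicit Defensive.
Import GRing.Theory Num.Theory.
Local Open Scope ring_scope.
Local Open Scope complex_scope.

Definition RR := Rdefinitions.R.
Definition CC := RR[i].

Record cstar_algebra := CStarAlgebra {
  cs_alg :> algType CC;
  cs_norm : cs_alg -> RR;
  cs_star : cs_alg -> cs_alg;
  cs_norm_ge0 : forall x, 0 <= cs_norm x;
  cs_norm_eq0 : forall x, cs_norm x = 0 -> x = 0;
  cs_normD : forall x y, cs_norm (x + y) <= cs_norm x + cs_norm y;
  cs_normZ : forall (c : CC) x, (cs_norm (c *: x))%:C = `|c| * (cs_norm x)%:C;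
  cs_normM : forall x y, cs_norm (x * y) <= cs_norm x * cs_norm y;
  cs_complete : forall f : nat -> cs_alg,
    (forall e : RR, 0 < e -> exists N, forall m n, (N <= m)%N -> (N <= n)%N ->
        cs_norm (f m - f n) < e) ->
    exists l, forall e : RR, 0 < e -> exists N, forall n, (N <= n)%N ->
        cs_norm (f n - l) < e;
  cs_starD : forall x y, cs_star (x + y) = cs_star x + cs_star y;
  cs_starZ : forall (c : CC) x, cs_star (c *: x) = (c^*)%C *: cs_star x;
  cs_starM : forall x y, cs_star (x * y) = cs_star y * cs_star x;
  cs_starK : forall x, cs_star (cs_star x) = x;
  cs_cstar : forall x, cs_norm (cs_star x * x) = cs_norm x ^+ 2
}.

(** *-homomorphism of C*-algebras (not required to be unital). *)
Definition star_hom (A B : cstar_algebra) (f : A -> B) : Prop :=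
  [/\ forall x y, f (x + y) = f x + f y,
      forall (c : CC) x, f (c *: x) = c *: f x,
      forall x y, f (x * y) = f x * f y
    & forall x, f (cs_star x) = cs_star (f x)].

(** Words of length n over X are n-tuples; concatenation with a letter is
    rcons_tuple (on the right) / cons_tuple (on the left); the empty word is
    [tuple]. *)
Definition word_family (X : finType) (B : cstar_algebra) :=
  forall n : nat, n.-tuple X -> n.-tuple X -> B.

Definition AX_relations (X : finType) (B : cstar_algebra)
    (b : word_family X B) : Prop :=
  [/\ b 0%N [tuple] [tuple] = 1,
      forall n (u v : n.-tuple X),
        cs_star (b n u v) = b n u v /\ b n u v * b n u v = b n u v
    & forall n (u v : n.-tuple X) (x : X),
        b n u v = \sum_(y : X) b n.+1 (rcons_tuple u x) (rcons_tuple v y) /\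
        b n u v = \sum_(z : X) b n.+1 (rcons_tuple u z) (rcons_tuple v x)].

Definition is_universal_AX (X : finType) (A : cstar_algebra)
    (a : word_family X A) : Prop :=
  AX_relations a /\
  forall (B : cstar_algebra) (b : word_family X B), AX_relations b ->
    exists phi : A -> B,
      [/\ star_hom phi,
          forall n (u v : n.-tuple X), phi (a n u v) = b n u v
        & forall psi : A -> B, star_hom psi ->
            (forall n (u v : n.-tuple X), psi (a n u v) = b n u v) ->
            forall z, psi z = phi z].

(* Main.v *)
Require Import Defs.
From mathcomp Require Import all_boot all_order all_algebra.
From mathcomp Require Import reals Rstruct complex.
From mathcomp Require Import lra.
Import Order.TTheory GRing.Theory Num.Theory.
Local Open Scope ring_scope.

Definition w : CC := Complex (3/5) (4/5).
Definition wb : CC := Complex (3/5) (-(4/5)).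

Lemma w_add : w + wb = ((6/5 : RR)%:C)%C.
Proof.
rewrite /w /wb.
rewrite -[(_ +i* _)%C + (_ +i* _)%C]/(_ +i* _)%C.
apply/eqP; rewrite eq_complex /=; apply/andP; split; apply/eqP; lra.
Qed.
Lemma w_mul : wb * w = 1.
Proof.
rewrite /w /wb.
rewrite -[(_ +i* _)%C * (_ +i* _)%C]/(_ +i* _)%C.
apply/eqP; rewrite eq_complex /=; apply/andP; split; apply/eqP; lra.
Qed.
Lemma w_sq : w * w + wb * wb = ((-14/25 : RR)%:C)%C.
Proof.
rewrite /w /wb.
rewrite -![(_ +i* _)%C * (_ +i* _)%C]/(_ +i* _)%C.
rewrite -[(_ +i* _)%C + (_ +i* _)%C]/(_ +i* _)%C.
apply/eqP; rewrite eq_complex /=; apply/andP; split; apply/eqP; lra.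
Qed.
Lemma w_conj : (w^*)%C = wb. Proof. by []. Qed.

Ltac cc := rewrite ?/w ?/wb ?/real_complex_def /=;
  rewrite -?[1 : CC]/(Complex 1 0) -?[0 : CC]/(Complex 0 0);
  simpc; apply/eqP; rewrite eq_complex /=; apply/andP; split; apply/eqP; lra.

Section CStar.
Variable A : cstar_algebra.
Local Notation N := (@cs_norm A).
Local Notation S := (@cs_star A).
Implicit Types x y g h p q : A.

Lemma RC_inj (r s : RR) : (r%:C = s%:C)%C -> r = s.
Proof. by case. Qed.

Lemma normZr (r : RR) x : 0 <= r -> N ((r%:C)%C *: x) = r * N x.
Proof.
move=> r0; apply: RC_inj; rewrite cs_normZ ger0_norm ?ler0c //.
by rewrite -rmorphM.
Qed.

Lemma norm0 : N 0 = 0.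
Proof. by rewrite -(scale0r (0:A)) -[0 : CC]/((0:RR)%:C)%C normZr ?mul0r. Qed.

Lemma normN x : N (- x) = N x.
Proof.
apply: RC_inj; rewrite -scaleN1r cs_normZ normrN1 mul1r //.
Qed.

Lemma normB x y : N (x - y) <= N x + N y.
Proof. by rewrite -(normN y); apply: cs_normD. Qed.

Lemma star0 : S 0 = 0.
Proof. by apply: (addrI (S 0)); rewrite -cs_starD !addr0. Qed.

Lemma starN x : S (- x) = - S x.
Proof. by apply/eqP; rewrite -subr_eq0 opprK -cs_starD addNr star0. Qed.

Lemma starB x y : S (x - y) = S x - S y.
Proof. by rewrite cs_starD starN. Qed.

Lemma star_sum (I : finType) (P : pred I) (F : I -> A) :
  S (\sum_(i | P i) F i) = \sum_(i | P i) S (F i).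
Proof. exact: (big_morph S (@cs_starD A) star0). Qed.

Lemma star1 : S 1 = 1.
Proof.
rewrite -[S 1]mulr1 -{2}(cs_starK 1) -cs_starM mulr1 cs_starK //.
Qed.

Lemma norm_ge0 x : 0 <= N x. Proof. exact: cs_norm_ge0. Qed.

Lemma norm_proj p : S p = p -> p * p = p -> N p <= 1.
Proof.
move=> sp pp; have := cs_cstar p; rewrite sp pp => e.
have := norm_ge0 p; nra.
Qed.

Lemma norm1 : N 1 <= 1.
Proof. by apply: norm_proj; rewrite ?star1 ?mulr1. Qed.

Lemma normM x y : N (x * y) <= N x * N y. Proof. exact: cs_normM. Qed.

Lemma sq_eq0 x : N (S x * x) = 0 -> x = 0.
Proof.
rewrite cs_cstar => h; apply: cs_norm_eq0.
by move/eqP: h; rewrite expf_eq0 /= => /eqP.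
Qed.


Definition lin (a b : CC) g : A := a *: 1 + b *: g.
Definition quad (a b c : CC) g : A := a *: 1 + b *: g + c *: (g * g).

Lemma mul_lin a b c d g : lin a b g * lin c d g = quad (a*c) (a*d + b*c) (b*d) g.
Proof.
rewrite /lin /quad mulrDl !mulrDr -!scalerAl -!scalerAr !mul1r !mulr1 !scalerA.
rewrite scalerDl !addrA; congr (_ + _); rewrite -!addrA; congr (_ + _).
Qed.

Lemma quad_add a b c a' b' c' g :
  quad a b c g + quad a' b' c' g = quad (a + a') (b + b') (c + c') g.
Proof. by rewrite /quad !scalerDl addrACA (addrACA (a *: 1)). Qed.

Lemma quad_scale k a b c g : k *: quad a b c g = quad (k * a) (k * b) (k * c) g.
Proof. by rewrite /quad !scalerDr !scalerA. Qed.


Lemma norm_comb (r s : RR) x y : 0 <= r -> 0 <= s ->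
  N ((r%:C)%C *: x + (s%:C)%C *: y) <= r * N x + s * N y.
Proof.
move=> r0 s0; apply: le_trans (cs_normD _ _) _.
by rewrite !normZr.
Qed.

Lemma norm_sq_le x : N x <= 1 -> N (x * x) <= 1.
Proof.
move=> h; apply: le_trans (normM _ _) _; have := norm_ge0 x; nra.
Qed.

Lemma norm_mul_le x y : N x <= 1 -> N y <= 1 -> N (x * y) <= 1.
Proof.
move=> h1 h2; apply: le_trans (normM _ _) _.
have := norm_ge0 x; have := norm_ge0 y; nra.
Qed.

Definition Pg g := S g = g /\ N (1 - g) <= 1 /\ N (1 + g) <= 1.

Lemma lin11 g : lin 1 1 g = 1 + g. Proof. by rewrite /lin !scale1r. Qed.
Lemma lin1N1 g : lin 1 (-1) g = 1 - g. Proof. by rewrite /lin scale1r scaleN1r. Qed.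
Lemma star_lin a b g : S g = g -> S (lin a b g) = lin (a^*)%C (b^*)%C g.
Proof. by move=> sg; rewrite /lin cs_starD !cs_starZ star1 sg. Qed.

Lemma sqrt_le1 x : N x ^+ 2 <= 1 -> N x <= 1.
Proof. have := norm_ge0 x; nra. Qed.

Lemma amp1 g : Pg g -> N (1 + ((6/5 : RR)%:C)%C *: g) <= 1.
Proof.
case=> sg [h1 h2].
have q : N (quad 1 ((6/5 : RR)%:C)%C 1 g) <= 1.
  have -> : quad 1 ((6/5 : RR)%:C)%C 1 g =
     ((4/5 : RR)%:C)%C *: (lin 1 1 g * lin 1 1 g)
   + ((1/5 : RR)%:C)%C *: (lin 1 (-1) g * lin 1 (-1) g).
    by rewrite !mul_lin !quad_scale quad_add; congr quad; cc.
  apply: (le_trans (norm_comb _ _ _ _ _ _)); try lra.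
  rewrite lin11 lin1N1.
  have := norm_sq_le _ h1; have := norm_sq_le _ h2; lra.
have nw : N (lin 1 w g) <= 1.
  apply: sqrt_le1; rewrite -cs_cstar star_lin // conjc1 mul_lin.
  suff -> : quad (1 * 1) (1 * w + (w^*)%C * 1) ((w^*)%C * w) g
           = quad 1 ((6/5 : RR)%:C)%C 1 g by [].
  by congr quad; cc.
have nwb : N (lin 1 wb g) <= 1.
  apply: sqrt_le1; rewrite -cs_cstar star_lin // conjc1 mul_lin.
  suff -> : quad (1 * 1) (1 * wb + (wb^*)%C * 1) ((wb^*)%C * wb) g
           = quad 1 ((6/5 : RR)%:C)%C 1 g by [].
  by congr quad; cc.
have -> : 1 + ((6/5 : RR)%:C)%C *: g =
  ((25/64 : RR)%:C)%C *: (lin 1 w g * lin 1 w g + lin 1 wb g * lin 1 wb g)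
  + ((7/32 : RR)%:C)%C *: (lin 1 wb g * lin 1 w g).
  transitivity (quad 1 ((6/5 : RR)%:C)%C 0 g).
    by rewrite /quad scale0r addr0 scale1r.
  by rewrite !mul_lin quad_add !quad_scale quad_add; congr quad; cc.
apply: (le_trans (norm_comb _ _ _ _ _ _)); try lra.
have := cs_normD (lin 1 w g * lin 1 w g) (lin 1 wb g * lin 1 wb g).
have := norm_mul_le _ _ nw nw; have := norm_mul_le _ _ nwb nwb; have := norm_mul_le _ _ nwb nw.
have := norm_ge0 (lin 1 w g * lin 1 w g + lin 1 wb g * lin 1 wb g).
lra.
Qed.


Lemma Pg_neg g : Pg g -> Pg (- g).
Proof. by case=> sg [h1 h2]; split; [rewrite starN sg | rewrite opprK]. Qed.

Lemma Pg_amp g : Pg g -> Pg (((6/5 : RR)%:C)%C *: g).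
Proof.
move=> hg; have [sg [h1 h2]] := hg; split; first by rewrite cs_starZ conjc_real sg.
split; last exact: amp1.
by rewrite -scalerN; apply: amp1; apply: Pg_neg.
Qed.

Lemma Pg_bound g : Pg g -> N g <= 1.
Proof.
case=> sg [h1 h2].
have e : (1 + g) - (1 - g) = ((2 : RR)%:C)%C *: g.
  rewrite opprB addrC addrA subrK -[(2:RR)]/(2%:R) rmorph_nat scaler_nat.
  by rewrite mulr2n.
have := normB (1 + g) (1 - g); rewrite e normZr //; lra.
Qed.

Lemma Pg_pow g n : Pg g -> Pg ((((6/5 : RR) ^+ n)%:C)%C *: g).
Proof.
move=> hg; elim: n => [|n ih]; first by rewrite expr0 rmorph1 scale1r.
by rewrite exprS rmorphM -scalerA; apply: Pg_amp.
Qed.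

End CStar.

Lemma bernoulli (x : RR) n : 0 <= x -> 1 + n%:R * x <= (1 + x) ^+ n.
Proof.
move=> x0; elim: n => [|n ih]; first by rewrite mul0r addr0 expr0.
rewrite exprS.
have h := ler_wpM2l (_ : 0 <= 1 + x) ih.
apply: (le_trans _ (h _)); last lra.
have h2 : 0 <= x * (n%:R * x) by rewrite !mulr_ge0.
rewrite -natr1 mulrDl mul1r mulrDl mul1r mulrDr mulr1.
lra.
Qed.
Lemma e65 : (6/5 : RR) = 1 + 1/5. Proof. lra. Qed.
Lemma lra15 : 0 <= (1/5 : RR). Proof. lra. Qed.
Lemma aux_arith (c m b : RR) : 0 <= c -> (1 + m * (1/5)) * c <= b -> b <= 1 -> 5 < m * c -> False.
Proof. move=> c0 h1 h2 h3; rewrite mulrDl mul1r mulrAC in h1. lra. Qed.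
Section X.
Variable A : cstar_algebra.
Local Notation N := (@cs_norm A).
Lemma Pg_zero (g : A) : Pg A g -> g = 0.
Proof.
move=> hg; apply: cs_norm_eq0.
have c0 := norm_ge0 _ g.
case: (ltrgt0P (N g)) => [cpos|//|->//]; last first.
  by move=> h; have := lt_le_trans h c0; rewrite ltxx.
exfalso.
set n := Num.Def.archi_bound (5 / N g).
have hn : 5 / N g < n%:R by apply: archi_boundP; apply: divr_ge0.
have hb := Pg_bound _ _ (Pg_pow _ _ n hg).
rewrite normZr ?exprn_ge0 // in hb.
have be := bernoulli (1/5) n.
rewrite e65 in hb.
have be' := be lra15.
have h3 := ler_wpM2r c0 be'.
have hn' : 5 < n%:R * N g by rewrite -ltr_pdivrMr.

move: c0 h3 hb hn'. apply: aux_arith.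
lra.
Qed.
End X.



Lemma le1_of_pow (c : RR) : 0 <= c -> (forall k, c ^+ (2 ^ k) <= 2) -> c <= 1.
Proof.
move=> c0 hk; rewrite leNgt; apply/negP => c1.
have x0 : 0 <= c - 1 by lra.
set n := Num.Def.archi_bound ((c - 1)^-1).
have hn : (c - 1)^-1 < n%:R by apply: archi_boundP; rewrite invr_ge0.
clearbody n.
have b := bernoulli (c - 1) (2 ^ n) x0.
have e : 1 + (c - 1) = c by lra.
rewrite e in b.
have h2 := hk n.
have hle : (n%:R : RR) <= (2 ^ n)%:R by rewrite ler_nat ltnW // ltn_expl.
have hp : 1 < n%:R * (c - 1).
  by rewrite -ltr_pdivrMr ?mul1r; lra.
have := ler_wpM2r x0 hle.
move: b h2 hp; clear; set a := (2 ^ n)%:R; move=> b h2 hp h; lra.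
Qed.

Section Pos.
Variable A : cstar_algebra.
Local Notation N := (@cs_norm A).
Local Notation S := (@cs_star A).
Implicit Types x y g h p q : A.

Definition pos h := S h = h /\ exists t : RR, 0 <= t /\ N ((t%:C)%C *: 1 - h) <= t.

Lemma pos0 : pos 0.
Proof.
split; first exact: star0.
by exists 0; rewrite rmorph0 scale0r subr0 norm0.
Qed.

Lemma pos_add h1 h2 : pos h1 -> pos h2 -> pos (h1 + h2).
Proof.
move=> [s1 [t1 [t10 n1]]] [s2 [t2 [t20 n2]]]; split; first by rewrite cs_starD s1 s2.
exists (t1 + t2); split; first lra.
rewrite rmorphD scalerDl opprD addrACA.
apply: le_trans (cs_normD _ _) _; lra.
Qed.

Lemma pos_sum (I : finType) (P : pred I) (F : I -> A) :
  (forall i, P i -> pos (F i)) -> pos (\sum_(i | P i) F i).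
Proof.
move=> hF; apply: (big_ind pos) => //; [exact: pos0 | exact: pos_add].
Qed.

Lemma pos_neg0 h : pos h -> pos (- h) -> h = 0.
Proof.
move=> [sh [t1 [t10 n1]]] [_ [t2 [t20 n2]]].
have N1 := norm1 A.
have n1' : N (((t1 + t2)%:C)%C *: 1 - h) <= t1 + t2.
  rewrite rmorphD scalerDl addrAC.
  apply: le_trans (cs_normD _ _) _; rewrite normZr //.
  have : t2 * N 1 <= t2 by rewrite ler_piMr.
  lra.
have n2' : N (((t1 + t2)%:C)%C *: 1 - - h) <= t1 + t2.
  rewrite rmorphD scalerDl -addrA.
  apply: le_trans (cs_normD _ _) _; rewrite normZr //.
  have : t1 * N 1 <= t1 by rewrite ler_piMr.
  lra.
set t := t1 + t2 in n1' n2'.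
have t0 : 0 <= t by rewrite /t; lra.
case: (ltrgt0P t) => [tpos|tneg|tz]; last first.
- rewrite tz rmorph0 scale0r sub0r normN in n1'.
  apply: cs_norm_eq0; apply/le_anti; rewrite n1' norm_ge0 //.
- by have := lt_le_trans tneg t0; rewrite ltxx.
set g := ((t^-1)%:C)%C *: h.
have eh : h = ((t%:C)%C) *: g.
  by rewrite /g scalerA -rmorphM mulfV ?gt_eqF // rmorph1 scale1r.
suff : g = 0 by rewrite eh => ->; rewrite scaler0.
apply: Pg_zero; split; first by rewrite /g cs_starZ conjc_real sh.
have ti0 : 0 <= t^-1 by rewrite invr_ge0.
have e1 : forall k : A, 1 + k = ((t^-1)%:C)%C *: ((t%:C)%C *: 1 + ((t%:C)%C *: k)).
  move=> k; rewrite scalerDr !scalerA -rmorphM mulVf ?gt_eqF // rmorph1 !scale1r //.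
have tt : t^-1 * t = 1 by rewrite mulVf ?gt_eqF.
split.
- rewrite -[1 - g]/(1 + - g) e1 /g scalerN scalerA -rmorphM mulfV ?gt_eqF // rmorph1 scale1r.
  rewrite normZr //; have := ler_wpM2l ti0 n1'; rewrite tt //.
- rewrite e1 /g scalerA -rmorphM mulfV ?gt_eqF // rmorph1 scale1r.
  rewrite normZr // -[X in N (_ + X)]opprK.
  have := ler_wpM2l ti0 n2'; rewrite tt //.
Qed.
End Pos.



Section Comp.
Variable A : cstar_algebra.
Local Notation N := (@cs_norm A).
Local Notation S := (@cs_star A).
Implicit Types x y g h p q : A.

Definition proj p := S p = p /\ p * p = p.

Lemma star_pow x n : S x = x -> S (x ^+ n) = x ^+ n.
Proof.
move=> sx; elim: n => [|n ih]; first by rewrite !expr0 star1.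
by rewrite exprS cs_starM ih sx -exprSr -exprS.
Qed.

Lemma norm_pow_le x n : N x <= 1 -> N (x ^+ n) <= 1.
Proof.
move=> h; elim: n => [|n ih]; first by rewrite expr0 norm1.
by rewrite exprS; apply: norm_mul_le.
Qed.

Lemma norm_pow2 x k : S x = x -> N (x ^+ (2 ^ k)) = N x ^+ (2 ^ k).
Proof.
move=> sx; elim: k => [|k ih]; first by rewrite expn0 !expr1.
rewrite expnSr !exprM -ih expr2 -{1}(star_pow _ (2 ^ k) sx) cs_cstar.
by [].
Qed.

Lemma proj_compl p : proj p -> proj (1 - p).
Proof.
move=> [sp pp]; split; first by rewrite starB star1 sp.
by rewrite mulrBl mul1r mulrBr mulr1 pp subrr subr0.
Qed.

Lemma pos_comp p q : proj p -> proj q -> pos A (p * q * p).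
Proof.
move=> hp hq; have [sp pp] := hp; have [sq qq] := hq.
split; first by rewrite !cs_starM sp sq mulrA.
exists 1; split => //; rewrite rmorph1 scale1r.
set e := 1 - p; set m := p * (1 - q) * p.
have he : proj e := proj_compl _ hp.
have [se ee] := he.
have hr : proj (1 - q) := proj_compl _ hq.
have ep : e * p = 0 by rewrite /e mulrBl mul1r pp subrr.
have pe : p * e = 0 by rewrite /e mulrBr mulr1 pp subrr.
have em : e * m = 0 by rewrite /m !mulrA ep !mul0r.
have me : m * e = 0 by rewrite /m -mulrA pe mulr0.
have sm : S m = m by rewrite /m !cs_starM sp (proj1 hr) mulrA.
have eh : 1 - p * q * p = e + m.
  by rewrite /e /m mulrBr mulr1 mulrBl pp addrA subrK.
have np : N p <= 1 := norm_proj _ _ sp pp.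
have nr : N (1 - q) <= 1 := norm_proj _ _ (proj1 hr) (proj2 hr).
have nm : N m <= 1 by apply: norm_mul_le => //; apply: norm_mul_le.
have ne : N e <= 1 := norm_proj _ _ se ee.
rewrite eh.
clearbody e m.
have emj : forall j, (0 < j)%N -> e * m ^+ j = 0 /\ m ^+ j * e = 0.
  move=> [|j] // _; split; first by rewrite exprS mulrA em mul0r.
  by rewrite exprSr -mulrA me mulr0.
have pw : forall k, (e + m) ^+ (2 ^ k) = e + m ^+ (2 ^ k).
  elim=> [|k ih]; first by rewrite expn0 !expr1.
  rewrite expnSr exprM ih expr2 mulrDl !mulrDr ee.
  have [h1 h2] := emj _ (expn_gt0 2 k).
  by rewrite h1 h2 addr0 add0r -exprD addnn -mul2n mulnC.
apply: le1_of_pow; first exact: norm_ge0.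
move=> k; rewrite -norm_pow2; last by rewrite cs_starD se sm.
rewrite pw; apply: le_trans (cs_normD _ _) _.
have := norm_pow_le _ (2 ^ k) nm; lra.
Qed.

Lemma pos_sum0 (I : finType) (P : pred I) (h0 : A) (F : I -> A) :
  pos A h0 -> (forall i, P i -> pos A (F i)) -> h0 + \sum_(i | P i) F i = 0 ->
  h0 = 0 /\ forall i, P i -> F i = 0.
Proof.
move=> p0 pF hs.
have h00 : h0 = 0.
  apply: pos_neg0 => //.
  have -> : - h0 = \sum_(i | P i) F i by apply/eqP; rewrite eq_sym -addr_eq0 addrC hs.
  exact: pos_sum.
split => // k Pk.
move: hs; rewrite h00 add0r (bigD1 k) //= => hs.
apply: pos_neg0; first exact: pF.
have -> : - F k = \sum_(i | P i && (i != k)) F i.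
  by apply/eqP; rewrite eq_sym -addr_eq0 addrC hs.
by apply: pos_sum => i /andP [Pi _]; apply: pF.
Qed.

Lemma orth (I : finType) (q : I -> A) (P : A) :
  (forall i, proj (q i)) -> proj P -> \sum_i q i = P ->
  (forall i j, i != j -> q i * q j = 0) /\ (forall i, P * q i = q i).
Proof.
move=> hq hP hs.
suff H : forall j, (forall i, i != j -> q i * q j = 0) /\ P * q j = q j.
  by split => [i j ij | j]; [apply: (proj1 (H j)) | apply: (proj2 (H j))].
move=> j; have [sj jj] := hq j.
have hsum : q j * (1 - P) * q j + \sum_(i | i != j) q j * q i * q j = 0.
  have eP : P = q j + \sum_(i | i != j) q i by rewrite -hs (bigD1 j).
  have eT : q j * (\sum_(i | i != j) q i) * q j = \sum_(i | i != j) q j * q i * q j.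
    by rewrite mulr_sumr mulr_suml; apply: eq_bigr => i _.
  rewrite mulrBr mulr1 mulrBl jj eP mulrDr mulrDl jj eT.
  by rewrite jj opprD addrA subrr sub0r addNr.
have [h0 hF] := pos_sum0 _ _ _ _ (pos_comp _ _ (hq j) (proj_compl _ hP))
                   (fun i _ => pos_comp _ _ (hq j) (hq i)) hsum.
split.
- move=> i ij; apply: sq_eq0.
  have [si ii] := hq i.
  rewrite cs_starM si sj mulrA -[q j * q i * q i]mulrA ii hF ?norm0 //.
- have z : (1 - P) * q j = 0.
    apply: sq_eq0; have [sP PP] := proj_compl _ hP.
    by rewrite cs_starM sj sP mulrA -[q j * (1 - P) * (1 - P)]mulrA PP h0 norm0.
  by move/eqP: z; rewrite mulrBl mul1r subr_eq0 => /eqP <-.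
Qed.

End Comp.



Lemma tuple_rcons_dec (T : eqType) n (u : n.+1.-tuple T) :
  exists (u' : n.-tuple T) c, u = rcons_tuple u' c.
Proof.
case: u => s hs; move: (hs).
case/lastP: s hs => [|s' c] hs hs'; first by [].
have hs2 : size s' == n by rewrite size_rcons in hs'.
by exists (Tuple hs2), c; apply: val_inj.
Qed.

Lemma cons_rcons (T : eqType) n (u : n.-tuple T) y c :
  cons_tuple y (rcons_tuple u c) = rcons_tuple (cons_tuple y u) c.
Proof. by apply: val_inj. Qed.

Lemma cons_nil (T : eqType) (y : T) : cons_tuple y [tuple] = rcons_tuple [tuple] y.
Proof. by apply: val_inj. Qed.

Theorem proposition4p1 (X : finType) (A : cstar_algebra) (a : word_family X A) :
  is_universal_AX a ->
  forall x : X, exists rho : A -> A,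
    star_hom rho /\
    forall (n : nat) (u v : n.-tuple X),
      rho (a n u v) = \sum_(y : X) a n.+1 (cons_tuple y u) (cons_tuple x v).
Proof.
move=> [[h1 h2 h3] univ] x.
have pa : forall n (u v : n.-tuple X), proj A (a n u v).
  by move=> n u v; have [] := h2 n u v.
have subP : forall n (u v : n.-tuple X) c d,
    a n u v * a n.+1 (rcons_tuple u c) (rcons_tuple v d) = a n.+1 (rcons_tuple u c) (rcons_tuple v d).
  move=> n u v c d.
  have [_ ] := @orth A X (fun d => a n.+1 (rcons_tuple u c) (rcons_tuple v d)) (a n u v)
     (fun d => pa _ _ _) (pa _ u v) (esym (proj1 (h3 n u v c))).
  by apply.
set P := fun y : X => a 1 (cons_tuple y [tuple]) (cons_tuple x [tuple]).
have colsum : \sum_y P y = 1.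
  rewrite -h1 (proj2 (h3 0 [tuple] [tuple] x)); apply: eq_bigr => y _.
  by rewrite /P !cons_nil.
have p1 : proj A 1 by rewrite -h1; apply: pa.
have [colorth _] := @orth A X P 1 (fun y => pa _ _ _) p1 colsum.
have dom : forall n (u v : n.-tuple X) y,
    P y * a n.+1 (cons_tuple y u) (cons_tuple x v) = a n.+1 (cons_tuple y u) (cons_tuple x v).
  elim=> [|n ih] u v y.
    by rewrite (tuple0 u) (tuple0 v); exact: (proj2 (pa _ _ _)).
  have [u' [c ->]] := tuple_rcons_dec _ _ u.
  have [v' [d ->]] := tuple_rcons_dec _ _ v.
  rewrite !cons_rcons -(subP _ (cons_tuple y u') (cons_tuple x v')) mulrA ih.
  by [].
have dom' : forall n (u v : n.-tuple X) y,
    a n.+1 (cons_tuple y u) (cons_tuple x v) * P y = a n.+1 (cons_tuple y u) (cons_tuple x v).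
  move=> n u v y.
  have [s1 _] := pa _ (cons_tuple y u) (cons_tuple x v).
  have [s2 _] := pa _ (cons_tuple y [tuple]) (cons_tuple x [tuple]).
  by rewrite -{1}s1 /P -{1}s2 -cs_starM dom s1.
set b : word_family X A := fun n u v => \sum_(y : X) a n.+1 (cons_tuple y u) (cons_tuple x v).
have hb : AX_relations b.
  split.
  - by rewrite /b -colsum; apply: eq_bigr.
  - move=> n u v; split.
      by rewrite /b star_sum; apply: eq_bigr => y _; rewrite (proj1 (pa _ _ _)).
    rewrite /b mulr_suml; apply: eq_bigr => y _.
    rewrite mulr_sumr (bigD1 y) //= big1 ?addr0; first exact: (proj2 (pa _ _ _)).
    move=> y' yy'.
    rewrite -(dom' _ u v y) -(dom _ u v y') -mulrA (mulrA (P y)) colorth ?mul0r ?mulr0 //.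
    by rewrite eq_sym.
  - move=> n u v c; split.
    + rewrite /b exchange_big /=; apply: eq_bigr => y _.
      rewrite (proj1 (h3 _ (cons_tuple y u) (cons_tuple x v) c)).
      by apply: eq_bigr => d _; rewrite !cons_rcons.
    + rewrite /b exchange_big /=; apply: eq_bigr => y _.
      rewrite (proj2 (h3 _ (cons_tuple y u) (cons_tuple x v) c)).
      by apply: eq_bigr => d _; rewrite !cons_rcons.
have [phi [hphi hphia _]] := univ A b hb.
by exists phi; split.
Qed.
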